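(* Let $G=(V,E)$ be a finite simple graph and $C\subseteq V$ such that no vertex of $V\setminus C$ is isolated in $G$, and let $m$ be a positive integer with $m\ge\gamma_{\rm gr}(G;C)$. Consider the integer program $F_1$ with binary variables $x_{vi},y_{vi}$ for $v\in V$, $i=1,\dots,m$ (and constants $x_{u0}=1$ for all $u\in V$): maximize $\sum_{i=1}^m\sum_{v\in V}y_{vi}$ subject to (a) $\sum_{v\in V}y_{vi}\le 1$ for all $i=1,\dots,m$; (b) $\sum_{i=1}^m y_{vi}\le 1$ for all $v\in V$; (c) $x_{ui}\le x_{u(i-1)}$ for all $u\in V$, $i=2,\dots,m$; (d) $x_{ui}+\sum_{v\in N\langle u\rangle}y_{vi}\le 1$ for all $u\in V$, $i=1,\dots,m$; (e) $y_{vi}\le\sum_{u\in N\langle v\rangle}(x_{u(i-1)}-x_{ui})$ for all $v\in V$, $i=2,\dots,m$; $x_{vi},y_{vi}\in\{0,1\}$. Then the optimal value of $F_1$ equals $\gamma_{\rm gr}(G;C)$.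
   Context: $N\langle v\rangle = N[v]$ (closed neighborhood) if $v\in C$ and $N\langle v\rangle=N(v)$ (open neighborhood) if $v\notin C$. A sequence $(v_1,\dots,v_k)$ of distinct vertices is legal if $N\langle v_i\rangle\setminus\bigcup_{j<i}N\langle v_j\rangle\neq\emptyset$ for all $i\ge 2$, and dominating if $\bigcup_j N\langle v_j\rangle=V$; $\gamma_{\rm gr}(G;C)$ is the maximum length of a legal dominating sequence of $G;C$. *)

(* Defs.v *)
From mathcomp Require Import all_boot all_order all_algebra.
Set Implicit Arguments. Unset Strict Implicit. Unset Printing Implicit Defensive.
Import Order.TTheory GRing.Theory Num.Theory.

Section Defs.
Variable T : finType.
Variable e : rel T.
Variable C : {set T}.

Definition simple_graph := symmetric e /\ irreflexive e.

Definition Nopen (v : T) : {set T} := [set u | e v u].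

Definition Nb (v : T) : {set T} :=
  if v \in C then v |: Nopen v else Nopen v.

Definition prefix_union (s : seq T) (i : nat) : {set T} :=
  \bigcup_(v <- take i s) Nb v.

(* legal: distinct vertices; every N<v_i> (i >= 2, 1-indexed) has a
   vertex not in the union of the earlier ones *)
Definition legal (s : seq T) : bool :=
  uniq s &&
  [forall i : 'I_(size s),
     (0 < i) ==> (Nb (tnth (in_tuple s) i) :\: prefix_union s i != set0)].

Definition dominating (s : seq T) : bool :=
  \bigcup_(v <- s) Nb v == [set: T].

(* Grundy domination number gamma_gr(G;C): maximum length of a legal
   dominating sequence (legal sequences have length <= #|T|). *)
Definition gamma_gr : nat :=
  \max_(k < #|T|.+1 | [exists s : k.-tuple T, legal s && dominating s]) k.

Variable m : nat.

Local Open Scope ring_scope.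
Definition xv (x : T -> nat -> bool) (u : T) (i : nat) : int :=
  if i == 0%N then 1 else Posz (nat_of_bool (x u i)).
Definition yv (y : T -> nat -> bool) (v : T) (i : nat) : int :=
  Posz (nat_of_bool (y v i)).

Definition F1_feasible (x y : T -> nat -> bool) : Prop :=
  (forall i, (1 <= i <= m)%N -> \sum_(v : T) yv y v i <= 1) /\
  (forall v, \sum_(1 <= i < m.+1) yv y v i <= 1) /\
  (forall u i, (2 <= i <= m)%N -> xv x u i <= xv x u i.-1) /\
  (forall u i, (1 <= i <= m)%N ->
               xv x u i + \sum_(v in Nb u) yv y v i <= 1) /\
  (forall v i, (2 <= i <= m)%N ->
               yv y v i <= \sum_(u in Nb v) (xv x u i.-1 - xv x u i)).

Definition F1_objective (y : T -> nat -> bool) : int :=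
  \sum_(1 <= i < m.+1) \sum_(v : T) yv y v i.

Definition F1_optimal_value (k : int) : Prop :=
  (exists x y, F1_feasible x y /\ F1_objective y = k) /\
  (forall x y, F1_feasible x y -> F1_objective y <= k).

End Defs.

(* Main.v *)
Require Import Defs.
From mathcomp Require Import all_boot all_order all_algebra.
From mathcomp Require Import zify.
Import Order.TTheory GRing.Theory Num.Theory.
Set Implicit Arguments. Unset Strict Implicit. Unset Printing Implicit Defensive.

Section Aux.
Variable T : finType.
Variable e : rel T.
Variable C : {set T}.
Hypothesis Hg : simple_graph e.

Lemma Nb_sym u v : (v \in Nb e C u) = (u \in Nb e C v).
Proof.
case: Hg => sym irr.
case: (eqVneq u v) => [->|neq] //.
rewrite /Nb /Nopen; case: ifP => _; case: ifP => _;
  rewrite ?in_setU1 !inE ?(negbTE neq) ?(eq_sym v u) ?(negbTE neq) /= sym //.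
Qed.

Lemma mem_bigcup_seq (s : seq T) (F : T -> {set T}) x :
  (x \in \bigcup_(w <- s) F w) = has (fun w => x \in F w) s.
Proof.
elim: s => [|a s IH]; first by rewrite big_nil inE.
by rewrite big_cons in_setU IH.
Qed.

Lemma legalP s x0 : legal e C s <->
  uniq s /\ (forall i, 0 < i < size s ->
     Nb e C (nth x0 s i) :\: prefix_union e C s i != set0).
Proof.
rewrite /legal; split.
  case/andP=> u /forallP H; split=> // i /andP[i0 iS].
  have := H (Ordinal iS); rewrite /= i0 /= (tnth_nth x0) //.
case=> u H; rewrite u /=; apply/forallP=> i; apply/implyP=> i0.
rewrite (tnth_nth x0); apply: H; rewrite i0; exact: ltn_ord.
Qed.

Lemma legal_rcons s v :
  legal e C s -> v \notin s ->
  (0 < size s -> exists2 u, u \in Nb e C v & u \notin \bigcup_(w <- s) Nb e C w) ->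
  legal e C (rcons s v).
Proof.
move=> /(legalP _ v) [us Hs] vs Hu; apply/(legalP _ v); split.
  by rewrite rcons_uniq vs.
move=> i; rewrite size_rcons ltnS => /andP[i0]; rewrite leq_eqVlt => /orP[/eqP ei|lt].
  subst i; rewrite nth_rcons ltnn eqxx /prefix_union -cats1 take_size_cat //.
  have [u uN uU] := Hu i0.
  apply/set0Pn; exists u; by rewrite in_setD uN uU.
rewrite nth_rcons lt /prefix_union -cats1 takel_cat; last exact: ltnW.
by apply: Hs; rewrite i0.
Qed.

Lemma legal_size s : legal e C s -> size s <= #|T|.
Proof. by case/andP=> u _; rewrite -(card_uniqP u); exact: max_card. Qed.

Hypothesis Hiso : forall v : T, v \notin C -> exists u, e v u.

Lemma extend_step s : legal e C s -> ~~ dominating e C s ->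
  exists v, legal e C (rcons s v).
Proof.
move=> Hl nd.
have : [exists w, w \notin \bigcup_(w <- s) Nb e C w].
  apply: contraNT nd => /existsPn H; apply/eqP/setP => w.
  by rewrite in_setT; apply/negPn/H.
case/existsP=> w wU.
have [v wv] : exists v, w \in Nb e C v.
  case: (boolP (w \in C)) => wC.
    by exists w; rewrite /Nb wC in_setU1 eqxx.
  have [u ewu] := Hiso wC; exists u; rewrite Nb_sym /Nb.
  by case: ifP => _; rewrite ?in_setU1 !inE ewu ?orbT.
exists v; apply: legal_rcons => //.
  apply: contra wU => vs; rewrite mem_bigcup_seq; apply/hasP; by exists v.
by move=> _; exists w.
Qed.

Lemma extend s : legal e C s -> exists s', [/\ legal e C s', dominating e C s' & size s <= size s'].
Proof.
move=> Hl; suff H : forall N s, legal e C s -> #|T| - size s <= N ->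
   exists s', [/\ legal e C s', dominating e C s' & size s <= size s'].
  exact: (H _ s Hl (leqnn _)).
elim=> [|N IH] {Hl}s Hl Hn.
  case: (boolP (dominating e C s)) => d; first by exists s.
  have [v Hv] := extend_step Hl d.
  have := legal_size Hv; rewrite size_rcons; have := legal_size Hl; lia.
case: (boolP (dominating e C s)) => d; first by exists s.
have [v Hv] := extend_step Hl d.
have Hn' : #|T| - size (rcons s v) <= N.
  by have := legal_size Hv; rewrite size_rcons; lia.
have [s' [l' d' z']] := IH _ Hv Hn'.
by exists s'; split => //; apply: leq_trans z'; rewrite size_rcons.
Qed.

Lemma leq_gamma s : legal e C s -> dominating e C s -> size s <= gamma_gr e C.
Proof.
move=> l d; have lt : size s < #|T|.+1 by rewrite ltnS legal_size.
rewrite /gamma_gr; apply: (@leq_bigmax_cond _ _ (fun k : 'I_#|T|.+1 => val k) (Ordinal lt)).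
apply/existsP; exists (in_tuple s); by rewrite l d.
Qed.

Lemma legal_le_gamma s : legal e C s -> size s <= gamma_gr e C.
Proof.
move=> l; have [s' [l' d' z']] := extend l.
exact: leq_trans z' (leq_gamma l' d').
Qed.

Lemma gamma_attained : exists s, [/\ legal e C s, dominating e C s & size s = gamma_gr e C].
Proof.
have l0 : legal e C [::] by rewrite /legal /=; apply/forallP => -[].
have [s [l d _]] := extend l0.
have lt : size s < #|T|.+1 by rewrite ltnS legal_size.
have P0 : [exists t : (Ordinal lt).-tuple T, legal e C t && dominating e C t].
  apply/existsP; exists (in_tuple s); by rewrite l d.
rewrite /gamma_gr (bigop.bigmax_eq_arg (Ordinal lt) P0).
case: arg_maxnP => // k /existsP [t /andP[lt' dt]] _.
by exists t; rewrite size_tuple.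
Qed.

Local Open Scope ring_scope.

Lemma sum_count (I : Type) (r : seq I) (b : pred I) :
  \sum_(v <- r) Posz (nat_of_bool (b v)) = Posz (count b r).
Proof. elim: r => [|a r IH]; first by rewrite big_nil. by rewrite big_cons IH /= PoszD. Qed.

Lemma sumPosz (I : Type) (r : seq I) (P : pred I) (F : I -> nat) :
  \sum_(v <- r | P v) Posz (F v) = Posz (\sum_(v <- r | P v) F v)%N.
Proof.
elim: r => [|a r IH]; first by rewrite !big_nil.
by rewrite !big_cons IH; case: (P a) => //; rewrite PoszD.
Qed.

Lemma xvE (x : T -> nat -> bool) u i : i != 0%N -> xv x u i = Posz (x u i).
Proof. by rewrite /xv => /negbTE ->. Qed.

Section Feas.
Variable m : nat.
Variables x y : T -> nat -> bool.
Hypothesis H : F1_feasible e C m x y.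

Lemma a_count i : (1 <= i <= m)%N -> (count (y^~ i) (index_enum T) <= 1)%N.
Proof.
case: H => Ha _ Hi; have := Ha i Hi; rewrite /yv sum_count.
by rewrite -[1]/(Posz 1) lez_nat.
Qed.

Lemma b_unique v i j : (1 <= i)%N -> (i < j)%N -> (j <= m)%N -> y v i -> y v j -> False.
Proof.
case: H => _ [Hb _] i1 ij jm yi yj.
have := Hb v; rewrite /yv sum_count -[1]/(Posz 1) lez_nat -size_filter.
have : (size [:: i; j] <= size [seq l <- index_iota 1 m.+1 | y v l])%N.
  apply: uniq_leq_size; first by rewrite /= inE andbT neq_ltn ij.
  move=> l; rewrite !inE mem_filter mem_index_iota => /orP[]/eqP->.
    by rewrite yi i1 /= ltnS (leq_trans (ltnW ij) jm).
  by rewrite yj /= ltnS jm (leq_trans i1 (ltnW ij)).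
by move=> /= /leq_trans H1 /H1.
Qed.

Lemma c_mono u i j : (1 <= i)%N -> (i <= j)%N -> (j <= m)%N -> x u j -> x u i.
Proof.
case: H => _ [_ [Hc _]] i1 ij jm.
elim: j ij jm => [|j IH]; first by rewrite leqn0 => /eqP ->.
rewrite leq_eqVlt => /orP[/eqP -> //|]; rewrite ltnS => ij jm xj.
apply: IH => //; first exact: ltnW.
have j1 : (1 <= j)%N by apply: leq_trans ij.
have := Hc u j.+1; rewrite /= ltnS j1 jm => /(_ isT).
rewrite !xvE //; last by rewrite -lt0n.
by rewrite lez_nat xj; case: (x u j).
Qed.

Lemma d_excl u w i : (1 <= i <= m)%N -> x u i -> w \in Nb e C u -> y w i -> False.
Proof.
case: H => _ [_ [_ [Hd _]]] Hi xi wN yw.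
have := Hd u i Hi; rewrite xvE; last by case/andP: Hi; rewrite lt0n.
rewrite /yv sumPosz xi -PoszD -[1]/(Posz 1) lez_nat (bigD1 w) //= yw.
by rewrite add1n ltnS ltn0.
Qed.

Lemma e_wit v i : (2 <= i <= m)%N -> y v i -> exists2 u, u \in Nb e C v & x u i.-1.
Proof.
case: H => _ [_ [_ [_ He]]] Hi yi.
case: (boolP [exists u, (u \in Nb e C v) && x u i.-1]).
  by case/existsP => u /andP[]; exists u.
move/existsPn => Hn; have := He v i Hi; rewrite /yv yi.
have : \sum_(u in Nb e C v) (xv x u i.-1 - xv x u i) <= 0.
  apply: sumr_le0 => u uN; have := Hn u; rewrite uN /= => /negbTE.
  have n1 : i != 0%N by case/andP: Hi => i2 _; lia.
  have n2 : i.-1 != 0%N by case/andP: Hi => i2 _; lia.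
  rewrite !xvE //.
  by move=> ->; rewrite sub0r oppr_le0.
by move=> A B; have := le_trans B A.
Qed.


Fixpoint Sq k : seq T :=
  if k is k'.+1 then Sq k' ++ [seq v <- index_enum T | y v k] else [::].

Lemma Sq_inv k : (k <= m)%N ->
  [/\ legal e C (Sq k),
      (forall w, w \in Sq k -> exists2 i, (1 <= i <= k)%N & y w i) &
      size (Sq k) = (\sum_(1 <= i < k.+1) count (y^~ i) (index_enum T))%N].
Proof.
elim: k => [|k IH] km.
  split => //; last by rewrite big_geq.
  by rewrite /legal /=; apply/forallP => -[].
have [l mem sz] := IH (ltnW km).
have Hi1 : (1 <= k.+1 <= m)%N by rewrite km.
have := a_count Hi1; rewrite -size_filter.
set L := [seq v <- index_enum T | y v k.+1].
have SqE : Sq k.+1 = Sq k ++ L by [].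
case E: L => [|v [|v' L']] _ //.
  rewrite SqE E cats0; split => //.
    by move=> w /mem [i Hi yi]; exists i => //; lia.
  by rewrite big_nat_recr //= -size_filter -/L E sz ?addn0.
have vL : v \in L by rewrite E inE.
have yv : y v k.+1 by move: vL; rewrite mem_filter => /andP[].
rewrite SqE E cats1; split.
- apply: legal_rcons => //.
    apply/negP => /mem [i /andP[i1 ik] yi].
    exact: (b_unique i1 (ik : (i < k.+1)%N) km yi yv).
  move=> sz0.
  have k1 : (0 < k)%N by move: sz0; rewrite sz; case: (k) => //; rewrite big_geq.
  have Hi2 : (2 <= k.+1 <= m)%N by rewrite km andbT.
  have [u uN xu] := e_wit Hi2 yv.
  exists u => //; rewrite mem_bigcup_seq; apply/hasPn => w /mem [i /andP[i1 ik] yw].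
  apply/negP => uw.
  apply: (d_excl (u:=u) (w:=w) (i:=i)) _ _ _ yw.
  + by rewrite i1 /= (leq_trans ik (ltnW km)).
  + exact: (c_mono i1 ik (ltnW km) xu).
  + by rewrite Nb_sym.
- move=> w; rewrite mem_rcons inE => /orP[/eqP->|/mem[i Hi yi]].
    by exists k.+1 => //; lia.
  by exists i => //; lia.
- by rewrite size_rcons sz [in RHS]big_nat_recr //= -size_filter -/L E addn1.
Qed.

Lemma obj_le : F1_objective m y <= Posz (gamma_gr e C).
Proof.
rewrite /F1_objective.
under eq_bigr => i _ do rewrite /yv sum_count.
rewrite sumPosz lez_nat.
have [l _ sz] := Sq_inv (leqnn m).
rewrite -sz; exact: legal_le_gamma.
Qed.

End Feas.

Lemma count_le1 (I : eqType) (r : seq I) (p : pred I) :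
  uniq r -> (forall i j, p i -> p j -> i = j) -> (count p r <= 1)%N.
Proof.
move=> ur Hp; rewrite -size_filter.
case E: (filter p r) => [|a t] //.
have aF : a \in filter p r by rewrite E inE eqxx.
have pa : p a by move: aF; rewrite mem_filter => /andP[].
rewrite -E; apply: (uniq_leq_size (s2 := [:: a])); first exact: filter_uniq.
by move=> w; rewrite mem_filter inE => /andP[pw _]; rewrite (Hp _ _ pw pa).
Qed.

Lemma sum_min n g : (\sum_(1 <= i < n.+1) ((0 < i <= g)%N : nat))%N = minn n g.
Proof.
elim: n => [|n IH]; first by rewrite big_geq // min0n.
rewrite big_nat_recr //= IH; case: (ltnP n g) => h /=; lia.
Qed.

Section Lower.
Variable s : seq T.
Hypothesis ls : legal e C s.

Definition y0 (v : T) (i : nat) : bool := (0 < i <= size s)%N && (v == nth v s i.-1).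
Definition x0 (u : T) (i : nat) : bool := u \notin prefix_union e C s i.

Lemma y0E v w i : (0 < i <= size s)%N -> y0 v i = (v == nth w s i.-1).
Proof.
move=> Hi; rewrite /y0 Hi /= (set_nth_default w) //.
by case/andP: Hi => i0 iS; rewrite prednK.
Qed.

Lemma prefix_mono i j : (i <= j)%N -> prefix_union e C s i \subset prefix_union e C s j.
Proof.
move=> ij; rewrite /prefix_union -(cat_take_drop i (take j s)) -take_min.
by rewrite (minn_idPl ij) big_cat subsetUl.
Qed.

Lemma x0_mono u i j : (i <= j)%N -> x0 u j -> x0 u i.
Proof.
move=> ij; rewrite /x0; apply: contra; exact: (subsetP (prefix_mono ij)).
Qed.

Lemma in_prefix u w i : (0 < i <= size s)%N -> u \in Nb e C (nth w s i.-1) ->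
  u \in prefix_union e C s i.
Proof.
case/andP=> i0 iS uN; rewrite /prefix_union mem_bigcup_seq; apply/hasP.
exists (nth w s i.-1) => //.
have lt : (i.-1 < i)%N by rewrite prednK.
rewrite -(nth_take w lt); apply: mem_nth; rewrite size_take_min.
by have -> : minn i (size s) = i by apply/minn_idPl.
Qed.

Lemma count_y0 i : count (fun v => y0 v i) (index_enum T) = (0 < i <= size s)%N.
Proof.
case Hi: (0 < i <= size s)%N; last first.
  by rewrite (eq_count (a2 := pred0)) ?count_pred0 // => v; rewrite /y0 Hi.
case E: s (Hi) => [|w t]; first by rewrite /=; lia.
rewrite -E => _.
rewrite (eq_count (a2 := pred1 (nth w s i.-1))); last by move=> v; rewrite /= (@y0E v w i Hi).
by rewrite count_uniq_mem ?index_enum_uniq // mem_index_enum.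
Qed.

Lemma sum_eq_in (A : {set T}) a :
  (\sum_(v in A) ((v == a) : nat))%N = (a \in A).
Proof.
case: (boolP (a \in A)) => aA.
  rewrite (bigD1 a) //= eqxx big1 // => v /andP[_ /negbTE ->] //.
by rewrite big1 // => v vA; case: eqP vA aA => // -> ->.
Qed.

Lemma term_ge0 u i : (2 <= i)%N -> 0 <= xv x0 u i.-1 - xv x0 u i.
Proof.
move=> i2; rewrite subr_ge0 !xvE; [|lia|lia].
rewrite lez_nat; case xi: (x0 u i) => //.
by rewrite (x0_mono (leq_pred i) xi).
Qed.

Lemma feas0 m : F1_feasible e C m x0 y0.
Proof.
split; [|split; [|split; [|split]]].
- move=> i Hi; rewrite /yv sum_count count_y0 -[1]/(Posz 1) lez_nat; by case: (_ && _).
- move=> v; rewrite /yv sum_count -[1]/(Posz 1) lez_nat.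
  apply: count_le1; first exact: iota_uniq.
  move=> i j /andP[/andP[i0 iS] /eqP ei] /andP[/andP[j0 jS] /eqP ej].
  case/andP: ls => us _.
  have : nth v s i.-1 == nth v s j.-1 by rewrite -ei -ej.
  rewrite nth_uniq //; last by rewrite prednK.
    by move/eqP => h; rewrite -(prednK i0) -(prednK j0) h.
  by rewrite prednK.
- move=> u i Hi; rewrite !xvE; [|lia|lia].
  rewrite lez_nat; case xi: (x0 u i) => //.
  by rewrite (x0_mono (leq_pred i) xi).
- move=> u i Hi; rewrite xvE; last by lia.
  rewrite /yv sumPosz -PoszD -[1]/(Posz 1) lez_nat.
  case Hs: (0 < i <= size s)%N; last first.
    by rewrite big1 ?addn0 ?leq_b1 // => v _; rewrite /y0 Hs.
  case E: s (Hs) => [|w t]; first by rewrite /=; lia.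
  rewrite -E => _.
  rewrite (eq_bigr (fun v => ((v == nth w s i.-1) : nat))); last by move=> v _; rewrite (@y0E v w i Hs).
  rewrite sum_eq_in.
  case: (boolP (nth w s i.-1 \in Nb e C u)) => aN; last by rewrite addn0 leq_b1.
  rewrite /x0 (in_prefix (w:=w)) // -Nb_sym //.
- move=> v i Hi.
  case yi: (y0 v i); last first.
    by rewrite /yv yi; apply: sumr_ge0 => u _; apply: term_ge0; lia.
  move: yi; rewrite /y0 => /andP[Hs /eqP ev].
  have : (0 < i.-1 < size s)%N by lia.
  case/(legalP _ v): ls => _ Hl /Hl /set0Pn [u]; rewrite in_setD -ev => /andP[uP uN].
  rewrite /yv /= (bigD1 u) //= !xvE; [|lia|lia].
  rewrite /x0 uP (in_prefix (w:=v)) -?ev //=.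
  rewrite Hs eqxx subr0 lerDl; apply: sumr_ge0 => u' _; apply: term_ge0; lia.
Qed.

Lemma obj0 m : (size s <= m)%N -> F1_objective m y0 = Posz (size s).
Proof.
move=> sm; rewrite /F1_objective.
under eq_bigr => i _ do rewrite /yv sum_count count_y0.
by rewrite sumPosz sum_min; congr Posz; apply/minn_idPr.
Qed.

End Lower.
End Aux.

Theorem theorem1 (T : finType) (e : rel T) (C : {set T}) (m : nat) :
  simple_graph e ->
  (forall v : T, v \notin C -> exists u, e v u) ->
  (0 < m)%N ->
  (gamma_gr e C <= m)%N ->
  F1_optimal_value e C m (Posz (gamma_gr e C)).
Proof.
move=> Hg Hiso m0 gm; split.
  have [s [l d sz]] := gamma_attained Hg Hiso.
  exists (x0 e C s), (y0 s); split; first exact: feas0.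
  by rewrite -sz (obj0 l) // sz.
move=> x y Hf. exact: (obj_le Hg Hiso Hf).
Qed.
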